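(* Let $H$ be an admissible Hamiltonian with vector field $f$, and let $g$ be associated to $f$ via $B$. Define $$\Pi(x)=J(x)-\varepsilon^2\,J(x)\,\mathcal H\,J(x)\,\mathcal H\,J(x).$$ Then $\Pi$ is a Poisson tensor on $\mathbb R^{2n}$ (i.e. the bracket $\{F,G\}_\Pi=(\nabla F)^T\Pi(x)\nabla G$ is skew-symmetric and satisfies the Jacobi identity), and both maps $\Phi_f(\cdot,\varepsilon)$ and $\Phi_g(\cdot,\varepsilon)$ are Poisson with respect to it: $d\Phi_f(x)\,\Pi(x)\,d\Phi_f(x)^T=\Pi(\Phi_f(x,\varepsilon))$ and $d\Phi_g(x)\,\Pi(x)\,d\Phi_g(x)^T=\Pi(\Phi_g(x,\varepsilon))$ wherever defined.
   Context: Fix an integer $n\ge 2$. Points of $\mathbb R^{2n}$ are $x=(x_1,\dots,x_{2n})^{T}$; write $u=(x_1,\dots,x_n)^T$. Let $X(u)$ be the $n\times n$ matrix with entries $X(u)_{ij}=x_{k}$ where $k\in\{1,\dots,n\}$, $k\equiv i+j-1 \pmod n$, and let $J(x)=\begin{pmatrix}0&X(u)\\-X(u)&0\end{pmatrix}$ (a skew-symmetric $2n\times 2n$ matrix depending linearly on $x$). Let $\mathcal P$ be the $n\times n$ cyclic shift matrix ($\mathcal P_{i,i+1}=1$ for $1\le i\le n-1$, $\mathcal P_{n,1}=1$, all other entries $0$) and $A=\begin{pmatrix}\mathcal P&0\\0&\mathcal P\end{pmatrix}$. An admissible Hamiltonian is a homogeneous quadratic form $H(x)=\tfrac12 x^T\mathcal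 H x$ with a constant symmetric matrix $\mathcal H=\nabla^2H$ satisfying $A\mathcal H=\mathcal H A^T$; its Hamiltonian vector field is $f(x)=J(x)\nabla H(x)$ and $f'(x)$ denotes the Jacobi matrix of $f$. Kahan map: for a vector field $f$ whose components are homogeneous quadratic polynomials and a parameter $\varepsilon$, the Kahan map is $\Phi_f(x,\varepsilon)=(I-\varepsilon f'(x))^{-1}x$ (defined wherever $I-\varepsilon f'(x)$ is invertible); it is the solution $\tilde x$ of $\frac{\tilde x-x}{2\varepsilon}=2f(\frac{x+\tilde x}{2})-\frac12f(x)-\frac12 f(\tilde x)$; $d\Phi_f(x)$ denotes its Jacobi matrix with respect to $x$. Associated vector fields: let $B=\sum_{i=0}^{n-1}\alpha_iA^i$ with $\alpha_i\in\mathbb C$ and $B^2=I$. If $H$ is an admissible Hamiltonian with vector field $f$, put $K(x)=\tfrac12 x^T B\mathcal H x$ (so $\nabla K=B\nabla H$) and $g(x)=J(x)\nabla K(x)=B^Tf(x)$; $g$ is said to be associated to $f$ via $B$. (When $B$ is complex, everything is considered over $\mathbb C^{2n}$.) *)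

(* Defs.v *)
From HB Require Import structures.
From mathcomp Require Import all_boot all_order all_algebra.
Set Implicit Arguments. Unset Strict Implicit. Unset Printing Implicit Defensive.
Import Order.TTheory GRing.Theory Num.Theory.
Local Open Scope ring_scope.

Section Defs.
Variable R : numFieldType.

Definition ordmod n (i j : 'I_n) : 'I_n :=
  Ordinal (@ltn_pmod (i + j)%N n (leq_ltn_trans (leq0n i) (ltn_ord i))).

(* X(u)_{ij} = x_k, k = i+j-1 mod n (1-indexed)  <=>  x_{(i+j) mod n} (0-indexed) *)
Definition Xmat n (x : 'cV[R]_(n + n)) : 'M[R]_n :=
  \matrix_(i < n, j < n) x (lshift n (ordmod i j)) 0.

Definition Jmat n (x : 'cV[R]_(n + n)) : 'M[R]_(n + n) :=
  block_mx 0 (Xmat x) (- Xmat x) 0.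

(* cyclic shift: P_{i,i+1} = 1, P_{n,1} = 1 (1-indexed) *)
Definition Pshift n : 'M[R]_n := \matrix_(i < n, j < n) ((j : nat) == (i.+1 %% n)%N)%:R.

Definition Amat n : 'M[R]_(n + n) := block_mx (Pshift n) 0 0 (Pshift n).

Definition mxpow m (M : 'M[R]_m) (k : nat) : 'M[R]_m := iter k (mulmx M) 1%:M.

(* Hamiltonian vector field f(x) = J(x) grad H(x), grad H(x) = Hc x *)
Definition hamvf n (Hc : 'M[R]_(n + n)) (x : 'cV[R]_(n + n)) : 'cV[R]_(n + n) :=
  Jmat x *m (Hc *m x).

(* associated vector field g(x) = J(x) grad K(x), grad K(x) = B Hc x *)
Definition assocvf n (B Hc : 'M[R]_(n + n)) (x : 'cV[R]_(n + n)) : 'cV[R]_(n + n) :=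
  Jmat x *m (B *m (Hc *m x)).

Definition PiT n (eps : R) (Hc : 'M[R]_(n + n)) (x : 'cV[R]_(n + n)) : 'M[R]_(n + n) :=
  Jmat x - eps ^+ 2 *: (Jmat x *m Hc *m Jmat x *m Hc *m Jmat x).

Definition evec m (l : 'I_m) : 'cV[R]_m := delta_mx l 0.

(* Jacobi matrix of a homogeneous quadratic vector field f, by polarization:
   column j of f'(x) is f'(x) e_j = f(x + e_j) - f(x) - f(e_j). *)
Definition qjac m (f : 'cV[R]_m -> 'cV[R]_m) (x : 'cV[R]_m) : 'M[R]_m :=
  \matrix_(i < m, j < m) (f (x + evec j) - f x - f (evec j)) i 0.

Definition kahan m (f : 'cV[R]_m -> 'cV[R]_m) (eps : R) (x : 'cV[R]_m) : 'cV[R]_m :=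
  invmx (1%:M - eps *: qjac f x) *m x.

Definition kahan_defined m (f : 'cV[R]_m -> 'cV[R]_m) (eps : R) (x : 'cV[R]_m) : bool :=
  (1%:M - eps *: qjac f x) \in unitmx.

Definition vnorm m (v : 'cV[R]_m) : R := \sum_i `|v i 0|.

Definition is_jacobian m (F : 'cV[R]_m -> 'cV[R]_m) (x : 'cV[R]_m) (D : 'M[R]_m) : Prop :=
  forall e : R, 0 < e -> exists2 d : R, 0 < d &
    forall h : 'cV[R]_m, vnorm h < d ->
      vnorm (F (x + h) - F x - D *m h) <= e * vnorm h.

Definition has_pderiv m (phi : 'cV[R]_m -> R) (x : 'cV[R]_m) (l : 'I_m) (d : R) : Prop :=
  forall e : R, 0 < e -> exists2 dl : R, 0 < dl &
    forall t : R, `|t| < dl ->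
      `|phi (x + t *: evec l) - phi x - t * d| <= e * `|t|.

Definition poisson_tensor m (Pi : 'cV[R]_m -> 'M[R]_m) : Prop :=
  (forall x, (Pi x)^T = - Pi x) /\
  (forall x, exists dP : 'I_m -> 'I_m -> 'I_m -> R,
     (forall l j k, has_pderiv (fun y => Pi y j k) x l (dP l j k)) /\
     (forall i j k, \sum_(l < m) (Pi x i l * dP l j k + Pi x j l * dP l k i
                                  + Pi x k l * dP l i j) = 0)).

Definition poisson_map m (Pi : 'cV[R]_m -> 'M[R]_m) (F : 'cV[R]_m -> 'cV[R]_m)
  (dom : 'cV[R]_m -> bool) : Prop :=
  forall x, dom x -> exists D : 'M[R]_m,
    is_jacobian F x D /\ D *m Pi x *m D^T = Pi (F x).

End Defs.

(* Main.v *)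
Require Import Defs.
From HB Require Import structures.
From mathcomp Require Import all_boot all_order all_algebra.
From mathcomp Require Import ring.
Set Implicit Arguments. Unset Strict Implicit. Unset Printing Implicit Defensive.
Import Order.TTheory GRing.Theory Num.Theory.
Local Open Scope ring_scope.

Section G.
Variable R : numFieldType.
Variable m : nat.
Local Notation n := m.+2.

Definition G := 'cV[R]_n.
HB.instance Definition _ := GRing.Zmodule.on G.

Definition Cm (y : G) : 'M[R]_n := \matrix_(i, j) y (i - j) 0.
Definition Xv (y : G) : 'M[R]_n := \matrix_(i, j) y (i + j) 0.
Definition flip (y : G) : G := \col_i y (- i) 0.
Definition e0 : G := delta_mx 0 0.

Lemma CmE y i j : Cm y i j = y (i - j) 0. Proof. by rewrite mxE. Qed.
Lemma XvE y i j : Xv y i j = y (i + j) 0. Proof. by rewrite mxE. Qed.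
Lemma flipE y i j : flip y i j = y (- i) 0. Proof. by rewrite mxE. Qed.

Lemma subKK (x y : 'I_n) : x - (x - y) = y.
Proof. by rewrite opprB addrC subrK. Qed.

Lemma CmC (y z : 'cV[R]_n) : Cm y *m z = Cm z *m y.
Proof.
apply/matrixP => i k; rewrite [k]ord1; rewrite !(mxE, CmE, XvE, flipE).
rewrite (reindex_inj (@inv_inj _ (fun j => i - j) (subKK i))) /=.
by apply: eq_bigr => j _; rewrite !(mxE, CmE, XvE, flipE) subKK mulrC.
Qed.

Lemma CmM (y z : 'cV[R]_n) : Cm (Cm y *m z) = Cm y *m Cm z.
Proof.
apply/matrixP => i k; rewrite !(mxE, CmE, XvE, flipE).
rewrite [RHS](reindex_inj (addIr k)) /=.
apply: eq_bigr => j _; rewrite !(mxE, CmE, XvE, flipE) addrK.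
by rewrite opprD addrA [_ - j]addrAC.
Qed.

Lemma Cm1 : Cm e0 = 1%:M.
Proof. by apply/matrixP => i j; rewrite !(mxE, CmE, XvE, flipE) subr_eq0 andbT. Qed.

Lemma CmD (y z : 'cV[R]_n) : Cm (y + z) = Cm y + Cm z.
Proof. by apply/matrixP => i j; rewrite !(mxE, CmE, XvE, flipE). Qed.

Lemma CmZ a (y : 'cV[R]_n) : Cm (a *: y) = a *: Cm y.
Proof. by apply/matrixP => i j; rewrite !(mxE, CmE, XvE, flipE). Qed.

Lemma Cme0 y : Cm y *m e0 = y.
Proof.
apply/matrixP => i j; rewrite ord1 !mxE (bigD1 0) //= big1 => [|k /negPf k0];
  by rewrite !(mxE, CmE, XvE, flipE) ?k0 ?subr0 ?mulr1 ?addr0 ?mulr0.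
Qed.

Lemma e0_neq0 : e0 != 0.
Proof. by apply/eqP => /matrixP /(_ 0 0); rewrite !(mxE, CmE, XvE, flipE) eqxx /= => /eqP; rewrite oner_eq0. Qed.


Definition gmul (y z : G) : G := Cm y *m z.
Lemma gmulA : associative gmul.
Proof. by move=> x y z; rewrite /gmul CmM mulmxA. Qed.
Lemma gmulC : commutative gmul.
Proof. by move=> x y; rewrite /gmul CmC. Qed.
Lemma gmul1 : left_id (e0 : G) gmul.
Proof. by move=> x; rewrite /gmul Cm1 mul1mx. Qed.
Lemma gmulDl : left_distributive gmul (@GRing.add G).
Proof. by move=> x y z; rewrite /gmul CmD mulmxDl. Qed.

HB.instance Definition _ := GRing.Zmodule_isComNzRing.Build G gmulA gmulC gmul1 gmulDl e0_neq0.

Lemma gmulE (y z : G) : y * z = Cm y *m z. Proof. by []. Qed.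
Lemma g1E : (1 : G) = e0. Proof. by []. Qed.

Lemma mx_ext k l (A B : 'M[R]_(k, l)) : (forall h : 'cV[R]_l, A *m h = B *m h) -> A = B.
Proof.
move=> H; apply/matrixP => i j.
have := congr1 (fun M : 'cV_k => M i 0) (H (delta_mx j 0)).
by rewrite -!colE !mxE.
Qed.

Lemma flipK (y : G) : flip (flip y) = y.
Proof. by apply/matrixP => i j; rewrite [j]ord1 !(mxE, CmE, XvE, flipE) opprK. Qed.
Lemma flipD (y z : G) : flip (y + z) = flip y + flip z.
Proof. by apply/matrixP => i j; rewrite !(mxE, CmE, XvE, flipE). Qed.
Lemma flipN (y : G) : flip (- y) = - flip y.
Proof. by apply/matrixP => i j; rewrite !(mxE, CmE, XvE, flipE). Qed.
Lemma flipB (y z : G) : flip (y - z) = flip y - flip z.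
Proof. by rewrite flipD flipN. Qed.
Lemma flip1 : flip (1 : G) = (1 : G).
Proof.
by apply/matrixP => i j; rewrite [j]ord1 !(mxE, CmE, XvE, flipE) oppr_eq0.
Qed.
Lemma flipZ a (y : 'cV[R]_n) : flip (a *: y) = a *: flip y.
Proof. by apply/matrixP => i j; rewrite !(mxE, CmE, XvE, flipE). Qed.
Lemma flipM (y z : G) : flip (y * z) = flip y * flip z.
Proof.
rewrite !gmulE; apply/matrixP => i k; rewrite [k]ord1 !(mxE, CmE, XvE, flipE).
rewrite [RHS](reindex_inj oppr_inj) /=.
by apply: eq_bigr => j _; rewrite !(mxE, CmE, XvE, flipE) !opprK opprD.
Qed.

Lemma CmT (y : G) : (Cm y)^T = Cm (flip y).
Proof. by apply/matrixP => i j; rewrite !(mxE, CmE, XvE, flipE) opprB. Qed.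
Lemma XvT (y : G) : (Xv y)^T = Xv y.
Proof. by apply/matrixP => i j; rewrite !(mxE, CmE, XvE, flipE) addrC. Qed.

Lemma Xv_mul (w y : G) : Xv w *m y = w * flip y.
Proof.
rewrite gmulE; apply/matrixP => i k; rewrite [k]ord1 !(mxE, CmE, XvE, flipE).
rewrite [RHS](reindex_inj oppr_inj) /=.
by apply: eq_bigr => j _; rewrite !(mxE, CmE, XvE, flipE) !opprK.
Qed.

Lemma CmXv (y w : G) : Cm y *m Xv w = Xv (y * w).
Proof.
apply: mx_ext => h; by rewrite -mulmxA !Xv_mul -gmulE mulrA.
Qed.

Lemma XvCmT (y w : G) : Xv w *m (Cm y)^T = Xv (y * w).
Proof.
apply: mx_ext => h; by rewrite -mulmxA !Xv_mul CmT -gmulE flipM flipK mulrCA mulrA.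
Qed.

Lemma scaleG a (y : G) : (a *: (y : 'cV_n) : G) = (a *: (1 : G) : G) * y.
Proof. by rewrite gmulE CmZ g1E Cm1 -scalemxAl mul1mx. Qed.

End G.

Ltac gring R m := match goal with |- @eq _ ?a ?b => change (@eq (G R m) a b) end; ring.

Section Blocks.
Variable R : numFieldType.
Variable m : nat.
Local Notation n := m.+2.
Local Notation G := (G R m).

Lemma ordmodE (i j : 'I_n) : ordmod i j = i + j.
Proof. by apply: val_inj. Qed.

Lemma XmatE (x : 'cV[R]_(n + n)) : Xmat x = Xv (usubmx x : G).
Proof. by apply/matrixP => i j; rewrite !mxE ordmodE. Qed.

Lemma JmatE (x : 'cV[R]_(n + n)) :
  Jmat x = block_mx 0 (Xv (usubmx x : G)) (- Xv (usubmx x : G)) 0.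
Proof. by rewrite /Jmat XmatE. Qed.

Lemma Jcol (x : 'cV[R]_(n + n)) (h1 h2 : G) :
  Jmat x *m col_mx h1 h2 = col_mx ((usubmx x : G) * flip h2) (- ((usubmx x : G) * flip h1)).
Proof.
by rewrite JmatE mul_block_col !mul0mx add0r addr0 mulNmx !Xv_mul.
Qed.

Definition Hf (a b c : G) : 'M[R]_(n + n) := block_mx (Xv a) (Xv b) (Xv b) (Xv c).

Lemma Hcol (a b c h1 h2 : G) :
  Hf a b c *m col_mx h1 h2 = col_mx (a * flip h1 + b * flip h2) (b * flip h1 + c * flip h2).
Proof. by rewrite /Hf mul_block_col !Xv_mul. Qed.

Lemma col_eq (a b c d : G) : a = c -> b = d -> col_mx a b = col_mx c d :> 'cV[R]_(n + n).
Proof. by move=> -> ->. Qed.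

Lemma ham_col (a b c u v : G) :
  hamvf (Hf a b c) (col_mx u v) =
  col_mx (u * (flip b * u + flip c * v)) (- (u * (flip a * u + flip b * v))).
Proof.
rewrite /hamvf Hcol Jcol col_mxKu.
by apply: col_eq; rewrite !(flipD, flipM, flipK).
Qed.

Definition Km (fa fb fc : G) (y : 'cV[R]_(n + n)) : 'M[R]_(n + n) :=
  let u := (usubmx y : G) in let v := (dsubmx y : G) in
  block_mx (Cm ((1 + 1) * fb * u + fc * v)) (Cm (fc * u))
           (Cm (- ((1 + 1) * fa * u + fb * v))) (Cm (- (fb * u))).

Lemma Kmul fa fb fc (u v h1 h2 : G) :
  Km fa fb fc (col_mx u v) *m col_mx h1 h2 =
  col_mx (((1 + 1) * fb * u + fc * v) * h1 + (fc * u) * h2)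
         ((- ((1 + 1) * fa * u + fb * v)) * h1 + (- (fb * u)) * h2).
Proof. by rewrite /Km col_mxKu col_mxKd mul_block_col. Qed.

Lemma quad (a b c : G) (x h : 'cV[R]_(n + n)) :
  hamvf (Hf a b c) (x + h) - hamvf (Hf a b c) x - hamvf (Hf a b c) h =
  Km (flip a) (flip b) (flip c) x *m h.
Proof.
rewrite -[x]vsubmxK -[h]vsubmxK add_col_mx !ham_col Kmul.
rewrite !opp_col_mx !add_col_mx; apply: col_eq; gring R m.
Qed.

Lemma qjacE (a b c : G) (x : 'cV[R]_(n + n)) :
  qjac (hamvf (Hf a b c)) x = Km (flip a) (flip b) (flip c) x.
Proof.
apply/matrixP => i j; rewrite mxE quad.
by rewrite /evec -colE mxE.
Qed.

Definition sc (r : R) : G := r *: (1 : G).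

Lemma scaleG' r (y : G) : (r *: (y : 'cV_n) : G) = sc r * y.
Proof. exact: scaleG. Qed.

Definition Delta (a b c : G) : G := flip a * flip c - flip b * flip b.
Definition phi (eps : R) (a b c : G) (x : 'cV[R]_(n + n)) : G :=
  let u := (usubmx x : G) in u + sc (eps ^+ 2) * Delta a b c * (u * u * u).
Definition Phi eps a b c x : 'cV[R]_(n + n) := col_mx (phi eps a b c x) (0 : G).

Lemma Jcol0 (w h1 h2 : G) :
  Jmat (col_mx w (0 : G)) *m col_mx h1 h2 = col_mx (w * flip h2) (- (w * flip h1)).
Proof. by rewrite Jcol col_mxKu. Qed.

Lemma PiE eps (a b c : G) (x : 'cV[R]_(n + n)) :
  PiT eps (Hf a b c) x = Jmat (Phi eps a b c x).
Proof.
apply: mx_ext => h; rewrite /PiT /Phi mulmxBl -scalemxAl -!mulmxA.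
rewrite -[h]vsubmxK -[x]vsubmxK !(Jcol, Hcol, col_mxKu) scale_col_mx opp_col_mx add_col_mx.
rewrite /phi col_mxKu !scaleG' /Delta.
apply: col_eq; rewrite !(flipD, flipM, flipK, flipN); gring R m.
Qed.

Definition Lb (l11 l12 l21 l22 : G) : 'M[R]_(n + n) :=
  block_mx (Cm l11) (Cm l12) (Cm l21) (Cm l22).

Lemma Lbcol (l11 l12 l21 l22 h1 h2 : G) :
  Lb l11 l12 l21 l22 *m col_mx h1 h2 = col_mx (l11 * h1 + l12 * h2) (l21 * h1 + l22 * h2).
Proof. by rewrite /Lb mul_block_col. Qed.

Lemma LbT (l11 l12 l21 l22 : G) :
  (Lb l11 l12 l21 l22)^T = Lb (flip l11) (flip l21) (flip l12) (flip l22).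
Proof. by rewrite /Lb tr_block_mx !CmT. Qed.

Lemma LJL (l11 l12 l21 l22 w : G) :
  Lb l11 l12 l21 l22 *m Jmat (col_mx w 0) *m (Lb l11 l12 l21 l22)^T =
  Jmat (col_mx ((l11 * l22 - l12 * l21) * w) (0 : G)).
Proof.
apply: mx_ext => h; rewrite -!mulmxA LbT -[h]vsubmxK Lbcol !Jcol0 Lbcol.
apply: col_eq; rewrite !(flipD, flipM, flipK, flipN); gring R m.
Qed.

Lemma JmatT (y : 'cV[R]_(n + n)) : (Jmat y)^T = - Jmat y.
Proof.
by rewrite JmatE tr_block_mx !trmx0 XvT linearN /= XvT opp_block_mx !oppr0 opprK.
Qed.

End Blocks.

Section Key.
Variable T : comRingType.

Lemma comb2 (A B c1 c2 p1 p2 : T) : p1 = 0 -> p2 = 0 -> A - B = c1 * p1 + c2 * p2 -> A = B.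
Proof. by move=> -> -> /eqP; rewrite !mulr0 addr0 subr_eq0 => /eqP. Qed.

Lemma keyG (E fa fb fc u v ut vt : T) :
  let D := fa * fc - fb * fb in
  let m11 := 1 - E * ((1 + 1) * fb * u + fc * v) in
  let m12 := - (E * (fc * u)) in
  let m21 := - (E * (- ((1 + 1) * fa * u + fb * v))) in
  let m22 := 1 - E * (- (fb * u)) in
  let n11 := 1 + E * ((1 + 1) * fb * ut + fc * vt) in
  let n12 := E * (fc * ut) in
  let n21 := E * (- ((1 + 1) * fa * ut + fb * vt)) in
  let n22 := 1 + E * (- (fb * ut)) in
  m11 * ut + m12 * vt = u -> m21 * ut + m22 * vt = v ->
  (n11 * n22 - n12 * n21) * (u + E * E * D * (u * u * u)) =
  (m11 * m22 - m12 * m21) * (ut + E * E * D * (ut * ut * ut)).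
Proof.
move=> D m11 m12 m21 m22 n11 n12 n21 n22 r1 r2.
have {}r1 : m11 * ut + m12 * vt - u = 0 by rewrite r1 subrr.
have {}r2 : m21 * ut + m22 * vt - v = 0 by rewrite r2 subrr.
set s := fb * ut + fc * vt; set t := fb * u + fc * v.
have h3 : ut * (m11 * m22 - m12 * m21) = u * (1 + E * t).
  by apply: (comb2 (c1:=m22) (c2:=(- m12)) r1 r2); rewrite /m11 /m12 /m21 /m22 /t; ring.
have h4 : u * (n11 * n22 - n12 * n21) = ut * (1 - E * s).
  by apply: (comb2 (c1:=(- n22)) (c2:=n12) r1 r2); rewrite /n11 /n12 /n21 /n22 /m11 /m12 /m21 /m22 /s; ring.
have h5 : ut - u - E * (u * s + ut * t) = 0.
  by apply: (comb2 (c1:=1) (c2:=0) r1 r2); rewrite /m11 /m12 /m21 /m22 /s /t; ring.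
have h6 : s - t + (1 + 1) * E * D * u * ut = 0.
  by apply: (comb2 (c1:=fb) (c2:=fc) r1 r2); rewrite /m11 /m12 /m21 /m22 /s /t /D; ring.
apply: (comb2 (c1:=1 + E * E * D * u * ut) (c2:=E * (u - ut)) h5 h6).
transitivity ((1 + E * E * D * (u * u)) * (u * (n11 * n22 - n12 * n21))
  - (1 + E * E * D * (ut * ut)) * (ut * (m11 * m22 - m12 * m21))); first by ring.
rewrite h3 h4 /s /t; ring.
Qed.

End Key.

Section Pois.
Variable R : numFieldType.
Variable m : nat.
Local Notation n := m.+2.
Local Notation G := (G R m).
Local Notation sc := (@sc R m).

Lemma Cm0 : Cm (0 : G) = 0.
Proof. by apply/matrixP => i j; rewrite !(mxE, CmE). Qed.
Lemma CmN (y : G) : Cm (- y) = - Cm y.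
Proof. by apply/matrixP => i j; rewrite !(mxE, CmE). Qed.
Lemma Cmsc r (y : G) : r *: Cm y = Cm (sc r * y).
Proof. by rewrite -CmZ scaleG'. Qed.
Lemma Cm1' : Cm (1 : G) = 1%:M.
Proof. by rewrite g1E Cm1. Qed.

Lemma scM r s : sc (r * s) = sc r * sc s :> G.
Proof. by rewrite -scaleG' /sc scalerA. Qed.

Lemma Mblock eps (k11 k12 k21 k22 : G) :
  1%:M - eps *: Lb k11 k12 k21 k22 =
  Lb (1 - sc eps * k11) (- (sc eps * k12)) (- (sc eps * k21)) (1 - sc eps * k22).
Proof.
rewrite /Lb (scalar_mx_block n n) scale_block_mx !Cmsc opp_block_mx add_block_mx.
by rewrite -!CmN -Cm1' -Cm0 -!CmD !add0r.
Qed.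

Lemma Nblock eps (k11 k12 k21 k22 : G) :
  1%:M + eps *: Lb k11 k12 k21 k22 =
  Lb (1 + sc eps * k11) (sc eps * k12) (sc eps * k21) (1 + sc eps * k22).
Proof.
rewrite /Lb (scalar_mx_block n n) scale_block_mx !Cmsc add_block_mx.
by rewrite -Cm1' -Cm0 -!CmD !add0r.
Qed.

Lemma KmLb fa fb fc (y : 'cV[R]_(n + n)) :
  Km fa fb fc y = Lb ((1 + 1) * fb * usubmx y + fc * dsubmx y) (fc * usubmx y)
     (- ((1 + 1) * fa * usubmx y + fb * dsubmx y)) (- (fb * usubmx y)).
Proof. by []. Qed.

Lemma kahan_pois eps (a b c : G) (x : 'cV[R]_(n + n)) :
  let M := 1%:M - eps *: qjac (hamvf (Hf a b c)) x in
  M \in unitmx ->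
  let xt := invmx M *m x in
  let D := invmx M *m (1%:M + eps *: qjac (hamvf (Hf a b c)) xt) in
  D *m PiT eps (Hf a b c) x *m D^T = PiT eps (Hf a b c) xt.
Proof.
move=> M uM xt D.
have hx : M *m xt = x by rewrite /xt mulKVmx.
rewrite /D; clearbody xt; move: uM hx; rewrite /M !qjacE !KmLb Mblock Nblock !PiE /Phi.
set W := invmx _.
set Mb := Lb _ _ _ _ => uM hx.
have WM : W *m Mb = 1%:M by rewrite mulVmx.
rewrite -[xt in Mb *m xt]vsubmxK Lbcol -[x in _ = x]vsubmxK in hx.
case/eq_col_mx: hx => r1 r2.
have key := @keyG G (sc eps) (flip a) (flip b) (flip c) (usubmx x) (dsubmx x) (usubmx xt) (dsubmx xt) r1 r2.
rewrite trmx_mul.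
set Nb := Lb _ _ _ _.
set J0 := Jmat _.
have -> : W *m Nb *m J0 *m (Nb^T *m W^T) = W *m (Nb *m J0 *m Nb^T) *m W^T by rewrite !mulmxA.
rewrite /Nb /J0 LJL.
have -> : (phi eps a b c x) = (usubmx x : G) + sc eps * sc eps * Delta a b c * ((usubmx x : G) * usubmx x * usubmx x).
  by rewrite /phi -scM -expr2.
rewrite key -LJL /Mb.
have -> : (phi eps a b c xt) = (usubmx xt : G) + sc eps * sc eps * Delta a b c * ((usubmx xt : G) * usubmx xt * usubmx xt).
  by rewrite /phi -scM -expr2.
rewrite -/Mb !mulmxA WM mul1mx -mulmxA -trmx_mul WM trmx1 mulmx1.
by [].
Qed.

End Pois.

Section Norms.
Variable R : numFieldType.
Variable N : nat.
Implicit Types (h k v : 'cV[R]_N) (A B : 'M[R]_N).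

Lemma vnorm_ge0 h : 0 <= vnorm h.
Proof. by apply: sumr_ge0 => i _; apply: normr_ge0. Qed.

Lemma vnormD h k : vnorm (h + k) <= vnorm h + vnorm k.
Proof. by rewrite /vnorm -big_split; apply: ler_sum => i _; rewrite mxE ler_normD. Qed.

Lemma vnormN h : vnorm (- h) = vnorm h.
Proof. by apply: eq_bigr => i _; rewrite mxE normrN. Qed.

Lemma vnormB h k : vnorm (h - k) <= vnorm h + vnorm k.
Proof. by rewrite -(vnormN k) vnormD. Qed.

Lemma vnormZ a h : vnorm (a *: h) = `|a| * vnorm h.
Proof. by rewrite /vnorm mulr_sumr; apply: eq_bigr => i _; rewrite mxE normrM. Qed.

Lemma vnorm_eq0 h : vnorm h = 0 -> h = 0.
Proof.
move/eqP; rewrite psumr_eq0 => [/allP H|i _]; last exact: normr_ge0.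
apply/matrixP => i j; rewrite [j]ord1 mxE; apply/eqP.
by have := H i (mem_index_enum i); rewrite normr_eq0.
Qed.

Lemma coord_le h j : `|h j 0| <= vnorm h.
Proof.
rewrite /vnorm (bigD1 j) //= ler_wpDr //.
by apply: sumr_ge0 => i _; apply: normr_ge0.
Qed.

Definition mnorm A : R := \sum_i \sum_j `|A i j|.

Lemma mnorm_ge0 A : 0 <= mnorm A.
Proof. by apply: sumr_ge0 => i _; apply: sumr_ge0 => j _; apply: normr_ge0. Qed.

Lemma vnorm_mul A h : vnorm (A *m h) <= mnorm A * vnorm h.
Proof.
rewrite /vnorm /mnorm mulr_suml; apply: ler_sum => i _; rewrite mxE mulr_suml.
apply: le_trans (ler_norm_sum _ _ _) _; apply: ler_sum => j _.
by rewrite normrM ler_wpM2l ?normr_ge0 // coord_le.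
Qed.

Lemma vnorm_sum (I : finType) (F : I -> 'cV[R]_N) :
  vnorm (\sum_i F i) <= \sum_i vnorm (F i).
Proof.
elim/big_rec2: _ => [|i y1 y2 _ H]; first by rewrite /vnorm big1 // => i _; rewrite mxE normr0.
by apply: le_trans (vnormD _ _) _; rewrite lerD2l.
Qed.

Lemma vec_decomp h : h = \sum_l h l 0 *: delta_mx l 0.
Proof. by rewrite {1}[h]matrix_sum_delta; apply: eq_bigr => l _; rewrite big_ord1. Qed.

Lemma Kbound (K : 'cV[R]_N -> 'M[R]_N) :
  (forall y z, K y *m z = K z *m y) ->
  exists2 c, 0 <= c & forall h v, vnorm (K h *m v) <= c * vnorm h * vnorm v.
Proof.
move=> Ks; exists (\sum_l mnorm (K (delta_mx l 0))).
  by apply: sumr_ge0 => l _; apply: mnorm_ge0.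
move=> h v; rewrite Ks {1}(vec_decomp h) mulmx_sumr.
apply: le_trans (vnorm_sum _) _; rewrite mulr_suml mulr_suml.
apply: ler_sum => l _; rewrite -scalemxAr vnormZ -Ks.
rewrite [_ * vnorm h]mulrC -mulrA (mulrC (vnorm h)).
rewrite [X in X <= _]mulrC; by apply: ler_pM; rewrite ?vnorm_ge0 ?normr_ge0 ?vnorm_mul ?coord_le.
Qed.

Lemma mx_ext_local (A B : 'M[R]_N) : (forall h : 'cV[R]_N, A *m h = B *m h) -> A = B.
Proof.
move=> H; apply/matrixP => i j.
have := congr1 (fun M : 'cV_N => M i 0) (H (delta_mx j 0)).
by rewrite -!colE !mxE.
Qed.

Lemma half_eq0 (a q : R) : 0 <= a -> a <= q * a -> (1 + 1) * q <= 1 -> a = 0.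
Proof.
move=> a0 aq q1; apply/eqP; rewrite eq_le a0 andbT.
have : (1 + 1) * a <= a.
  apply: le_trans (_ : (1 + 1) * (q * a) <= a).
    by rewrite ler_wpM2l // addr_ge0 ?ler01.
  by rewrite mulrA -[X in _ <= X]mul1r ler_wpM2r.
by rewrite mulrDl mul1r -[X in _ <= X]addr0 lerD2l.
Qed.

Lemma half_le (a b q : R) : 0 <= a -> a <= b + q * a -> (1 + 1) * q <= 1 -> a <= (1 + 1) * b.
Proof.
move=> a0 aq q1.
have : (1 + 1) * a <= (1 + 1) * b + a.
  apply: le_trans (_ : (1 + 1) * (b + q * a) <= _).
    by rewrite ler_wpM2l // addr_ge0 ?ler01.
  by rewrite mulrDr lerD2l mulrA -[X in _ <= X]mul1r ler_wpM2r.
by rewrite mulrDl mul1r addrC lerD2r.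
Qed.

Lemma kahan_jac (K : 'cV[R]_N -> 'M[R]_N) eps x :
  (forall y z, K y *m z = K z *m y) ->
  (1%:M - eps *: K x) \in unitmx ->
  is_jacobian (fun y => invmx (1%:M - eps *: K y) *m y) x
    (invmx (1%:M - eps *: K x) *m (1%:M + eps *: K (invmx (1%:M - eps *: K x) *m x))).
Proof.
move=> Ks uM.
have KD y z : K (y + z) = K y + K z.
  apply: mx_ext_local => w; by rewrite mulmxDl !(Ks _ w) mulmxDr.
set M := 1%:M - eps *: K x; set W := invmx M; set xt := W *m x.
set D := W *m _.
have [cK cK0 HK] := Kbound Ks.
set c := `|eps| * mnorm W * cK.
have c0 : 0 <= c by rewrite mulr_ge0 ?mulr_ge0 ?normr_ge0 ?mnorm_ge0.
have Hc h v : vnorm (eps *: (W *m (K h *m v))) <= c * vnorm h * vnorm v.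
  rewrite vnormZ /c -!mulrA ler_wpM2l // ?normr_ge0 //.
  apply: le_trans (vnorm_mul _ _) _; rewrite ler_wpM2l ?mnorm_ge0 //.
  by rewrite mulrA.
set mD := mnorm D.
have mD0 : 0 <= mD by exact: mnorm_ge0.
move=> e e0.
have two0 : 0 <= 1 + 1 :> R by rewrite addr_ge0 ?ler01.
have p1 : 0 < 1 + (1 + 1) * c by apply: ltr_pwDl ltr01 _; rewrite mulr_ge0.
have p2 : 0 < 1 + (1 + 1) * c * mD by apply: ltr_pwDl ltr01 _; rewrite mulr_ge0 // mulr_ge0.
set d1 := (1 + (1 + 1) * c)^-1; set d2 := e / (1 + (1 + 1) * c * mD).
have d10 : 0 < d1 by rewrite invr_gt0.
have d20 : 0 < d2 by rewrite divr_gt0.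
have p3 : 0 < 1 + d2 by apply: ltr_pwDl ltr01 _; apply: ltW.
have q1 : d2 / (1 + d2) <= 1 by rewrite ler_pdivrMr // mul1r lerDr ler01.
have q2 : d2 / (1 + d2) <= d2.
  by rewrite ler_pdivrMr // ler_pMr // lerDl ltW.
have q0 : 0 < d2 / (1 + d2) by rewrite divr_gt0.
have d11 : d1 <= 1 by rewrite invf_le1 // lerDl mulr_ge0.
exists (d1 * (d2 / (1 + d2))); first by rewrite mulr_gt0.
move=> h hd; set t := vnorm h.
have t0 : 0 <= t by exact: vnorm_ge0.
have t1 : t <= d1.
  apply: ltW; apply: lt_le_trans hd _.
  by rewrite -[X in _ <= X]mulr1 ler_wpM2l // ltW.
have t2 : t <= d2.
  apply: ltW; apply: lt_le_trans hd _.
  by apply: le_trans q2; rewrite -[X in _ <= X]mul1r ler_wpM2r // ltW.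
have ct : (1 + 1) * (c * t) <= 1.
  move: t1; rewrite /d1 -div1r ler_pdivlMr // => t1.
  apply: le_trans t1.
  have -> : t * (1 + (1 + 1) * c) = (1 + 1) * (c * t) + t by ring.
  by rewrite lerDl.
have ct2 : (1 + 1) * c * mD * t <= e.
  move: t2; rewrite /d2 ler_pdivlMr // => t2.
  apply: le_trans t2.
  have -> : t * (1 + (1 + 1) * c * mD) = (1 + 1) * c * mD * t + t by ring.
  by rewrite lerDl.
have uM' : 1%:M - eps *: K (x + h) \in unitmx.
  rewrite -unitmx_tr -row_free_unit; apply: inj_row_free => w Hw.
  have Hz : (1%:M - eps *: K (x + h)) *m w^T = 0.
    by have := congr1 trmx Hw; rewrite trmx_mul trmxK trmx0.
  have Ez : w^T = eps *: (W *m (K h *m w^T)).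
    rewrite -{1}[w^T](mulKmx uM) -/W scalemxAr; congr (W *m _).
    move: Hz; rewrite KD scalerDr opprD addrA mulmxDl => /eqP; rewrite addr_eq0 => /eqP ->.
    by rewrite mulNmx opprK scalemxAl.
  have : vnorm w^T = 0.
    apply: (@half_eq0 _ (c * t)) => //; first exact: vnorm_ge0.
    by rewrite {1}Ez (le_trans (Hc _ _)) // mulrA.
  by move/vnorm_eq0 => /(congr1 trmx); rewrite trmxK trmx0.
set xt' := invmx (1%:M - eps *: K (x + h)) *m (x + h).
have Hxt' : (1%:M - eps *: K (x + h)) *m xt' = x + h by rewrite /xt' mulKVmx.
have Mxt : M *m xt = x by rewrite /xt mulKVmx.
have DhE : D *m h = W *m h + eps *: (W *m (K h *m xt)).
  by rewrite /D -mulmxA mulmxDl mul1mx -scalemxAl Ks mulmxDr -scalemxAr.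
set del := xt' - xt.
have xt'E : xt' = xt + del by rewrite /del addrC subrK.
clearbody del xt' D xt.
have Edel : del - D *m h = eps *: (W *m (K h *m del)).
  have Mdel : M *m del = h + eps *: (K h *m xt').
    have -> : del = xt' - xt by rewrite xt'E addrC addKr.
    rewrite mulmxBr Mxt.
    move: Hxt'; rewrite KD scalerDr opprD addrA mulmxDl -/M => /(canRL (addrK _)) ->.
    by rewrite mulNmx opprK -scalemxAl addrAC [x + h - x]addrAC subrr add0r.
  have Hdel : del = W *m h + eps *: (W *m (K h *m xt)) + eps *: (W *m (K h *m del)).
    rewrite -{1}(mulKmx uM del) -/W Mdel xt'E mulmxDr mulmxDr scalerDr mulmxDr.
    by rewrite -!scalemxAr addrA.
  by rewrite {1}Hdel DhE addrAC subrr add0r.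
have bdel : vnorm del <= (1 + 1) * (mD * t).
  apply: (@half_le _ _ (c * t)) => //; first exact: vnorm_ge0.
  have dE : del = D *m h + eps *: (W *m (K h *m del)) by rewrite -Edel addrC subrK.
  rewrite {1}dE; apply: le_trans (vnormD _ _) _; apply: lerD; first exact: vnorm_mul.
  exact: Hc.
rewrite Edel; apply: le_trans (Hc _ _) _.
apply: le_trans (_ : c * t * ((1 + 1) * (mD * t)) <= _).
  by rewrite ler_wpM2l // mulr_ge0.
have -> : c * t * ((1 + 1) * (mD * t)) = (1 + 1) * c * mD * t * t by ring.
by rewrite ler_wpM2r.
Qed.

End Norms.

Section Jac.
Variable R : numFieldType.
Variable m : nat.
Local Notation n := m.+2.
Local Notation G := (G R m).
Local Notation sc := (@sc R m).

Definition J0 (w : G) : 'M[R]_(n + n) := Jmat (col_mx w (0 : G)).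

Lemma J0E (w : G) : J0 w = block_mx 0 (Xv w) (- Xv w) 0.
Proof. by rewrite /J0 JmatE col_mxKu. Qed.

Lemma J0_LL (w : G) i j : J0 w (lshift n i) (lshift n j) = 0.
Proof. by rewrite J0E block_mxEul mxE. Qed.
Lemma J0_LR (w : G) i j : J0 w (lshift n i) (rshift n j) = w (i + j) 0.
Proof. by rewrite J0E block_mxEur XvE. Qed.
Lemma J0_RL (w : G) i j : J0 w (rshift n i) (lshift n j) = - w (i + j) 0.
Proof. by rewrite J0E block_mxEdl mxE XvE. Qed.
Lemma J0_RR (w : G) i j : J0 w (rshift n i) (rshift n j) = 0.
Proof. by rewrite J0E block_mxEdr mxE. Qed.

Lemma XvD (w1 w2 : G) : Xv (w1 + w2) = Xv w1 + Xv w2.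
Proof. by apply/matrixP => i j; rewrite !mxE. Qed.
Lemma XvS r (w : G) : Xv (sc r * w) = r *: Xv w.
Proof. by apply/matrixP => i j; rewrite -scaleG' !mxE. Qed.

Lemma J0D (w1 w2 : G) : J0 (w1 + w2) = J0 w1 + J0 w2.
Proof. by rewrite !J0E add_block_mx XvD opprD !addr0. Qed.

Lemma J0sc r (w : G) : J0 (sc r * w) = r *: J0 w.
Proof. by rewrite !J0E scale_block_mx XvS !scaler0 scalerN. Qed.

Lemma dlt_mul (l : 'I_n) (psi : G) p : ((delta_mx l 0 : G) * psi) p 0 = psi (p - l) 0.
Proof. by rewrite mulrC gmulE -colE !mxE. Qed.

Lemma conv_shift (a b : 'I_n) (f g : 'I_n -> R) :
  \sum_l f (a + l) * g (b - l) = \sum_l f l * g (a + b - l).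
Proof.
rewrite (reindex_inj (addrI (- a))) /=; apply: eq_bigr => l _.
by congr (f _ * g _); ring.
Qed.

Lemma usub_evecL (l : 'I_n) : (usubmx (evec R (lshift n l)) : G) = delta_mx l 0.
Proof. by apply/matrixP => i j; rewrite !mxE eq_lshift. Qed.
Lemma usub_evecR (l : 'I_n) : (usubmx (evec R (rshift n l)) : G) = 0.
Proof. by apply/matrixP => i j; rewrite !mxE eq_lrshift. Qed.

Lemma J0_0 : J0 0 = 0.
Proof. by rewrite J0E /Xv; apply/matrixP => i j; rewrite !mxE; case: splitP => ? ?; rewrite !mxE ?oppr0; case: splitP => ? ?; rewrite !mxE ?oppr0. Qed.

Lemma cubic_small (A B e : R) : 0 < e ->
  exists2 dl : R, 0 < dl & forall t : R, `|t| < dl ->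
    `|t * (t * A) + t * (t * (t * B))| <= e * `|t|.
Proof.
move=> e0.
set c := `|A| + `|B| + 1.
have c0 : 0 < c by apply: ltr_pwDr ltr01 _; rewrite addr_ge0.
set q := e / c.
have q0 : 0 < q by rewrite divr_gt0.
have p3 : 0 < 1 + q by apply: ltr_pwDl ltr01 _; apply: ltW.
exists (q / (1 + q)); first by rewrite divr_gt0.
move=> t ht.
have t0 : 0 <= `|t| by [].
have t1 : `|t| <= 1.
  apply: ltW; apply: lt_le_trans ht _; by rewrite ler_pdivrMr // mul1r lerDr ltW.
have t2 : `|t| * c <= e.
  rewrite -ler_pdivlMr //; apply: ltW; apply: lt_le_trans ht _.
  by rewrite ler_pdivrMr // ler_pMr // lerDl ltW.
have -> : t * (t * A) + t * (t * (t * B)) = t * (t * A + t * (t * B)) by ring.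
rewrite normrM mulrC ler_wpM2r //.
apply: le_trans (ler_normD _ _) _; rewrite !normrM.
apply: le_trans t2; rewrite /c mulrDr mulrDr mulr1 -addrA lerD2l.
apply: le_trans (_ : `|t| * `|B| <= _); last by rewrite lerDl.
rewrite mulrA ler_wpM2r // -[X in _ <= X]mulr1 ler_wpM2l //.
Qed.

Lemma usubD (y z : 'cV[R]_(n + n)) : (usubmx (y + z) : G) = usubmx y + usubmx z.
Proof. by apply/matrixP => i j; rewrite !mxE. Qed.
Lemma usubZ t (y : 'cV[R]_(n + n)) : (usubmx (t *: y) : G) = sc t * usubmx y.
Proof. by rewrite -scaleG'; apply/matrixP => i j; rewrite !mxE. Qed.

Lemma addmxE' (A B : 'M[R]_(n + n)) i j : (A + B) i j = A i j + B i j.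
Proof. by rewrite mxE. Qed.
Lemma scalemxE' r (A : 'M[R]_(n + n)) i j : (r *: A) i j = r * A i j.
Proof. by rewrite mxE. Qed.

Lemma unsplitL (i : 'I_n) : unsplit (inl i) = lshift n i :> 'I_(n + n). Proof. by []. Qed.
Lemma unsplitR (i : 'I_n) : unsplit (inr i) = rshift n i :> 'I_(n + n). Proof. by []. Qed.

Lemma PiJ0 eps (a b c : G) y : PiT eps (Hf a b c) y = J0 (phi eps a b c y).
Proof. by rewrite PiE. Qed.

Lemma pt eps (a b c : G) : poisson_tensor (PiT eps (Hf a b c)).
Proof.
split; first by move=> x; rewrite PiE JmatT.
move=> x.
set u : G := usubmx x.
set psi : G := 1 + (1 + 1 + 1) * sc (eps ^+ 2) * Delta a b c * (u * u).
exists (fun l j k => J0 ((usubmx (evec R l) : G) * psi) j k); split.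
  move=> l j k e e0.
  set dl : G := usubmx (evec R l).
  set q2 : G := (1 + 1 + 1) * sc (eps ^+ 2) * Delta a b c * u * (dl * dl).
  set q3 : G := sc (eps ^+ 2) * Delta a b c * (dl * dl * dl).
  have [d d0 Hd] := cubic_small (J0 q2 j k) (J0 q3 j k) e0.
  exists d => // t ht.
  have E : phi eps a b c (x + t *: evec R l) = phi eps a b c x + sc t * (dl * psi)
      + sc t * (sc t * q2) + sc t * (sc t * (sc t * q3)).
    rewrite /phi usubD usubZ -/u -/dl /psi /q2 /q3; gring R m.
  rewrite !PiJ0 E !J0D !J0sc !(addmxE', scalemxE').
  have -> : forall P Q A B : R, P + t * Q + t * (t * A) + t * (t * (t * B)) - P - t * Q
      = t * (t * A) + t * (t * (t * B)) by move=> *; ring.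
  exact: Hd.
move=> i j k.
rewrite PiJ0; set ph := phi eps a b c x.
rewrite big_split_ord /= [X in _ + X]big1 ?addr0 => [|l _]; last first.
  by rewrite usub_evecR mul0r J0_0 !mxE !mulr0 !addr0.
under eq_bigr => l _ do rewrite usub_evecL.
rewrite -(splitK i) -(splitK j) -(splitK k).
case: (split i) => i'; case: (split j) => j'; case: (split k) => k';
  rewrite ?unsplitL ?unsplitR;
  under eq_bigr => l _ do rewrite ?(J0_LL, J0_LR, J0_RL, J0_RR) ?dlt_mul ?mulr0 ?mul0r ?addr0 ?add0r.
all: try by rewrite big1.
all: under eq_bigr => l _ do rewrite ?mulNr ?mulrN ?opprK.
all: rewrite big_split /= sumrN; apply/eqP; rewrite ?subr_eq0 ?addr_eq0 ?opprK; apply/eqP.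
all: rewrite !(conv_shift _ _ (fun p => ph p 0) (fun p => psi p 0)).
all: try congr (- _).
all: by apply: eq_bigr => l _; congr (_ * psi (_ - _) 0); ring.
Qed.

End Jac.

Section Struct.
Variable R : numFieldType.
Variable m : nat.
Local Notation n := m.+2.
Local Notation G := (G R m).
Local Notation sc := (@sc R m).

Lemma val_add1 (i : 'I_n) : val (i + 1) = (i.+1 %% n)%N.
Proof. by rewrite /= [(1 %% _)%N]modn_small // addn1. Qed.

Lemma P_entry (Y : 'M[R]_n) i j : (Pshift R n *m Y) i j = Y (i + 1) j.
Proof.
rewrite mxE (bigD1 (i + 1)) //= big1 ?addr0 => [|k kn].
  by rewrite mxE val_add1 eqxx mul1r.
rewrite mxE; case: eqP => [h|]; last by rewrite mul0r.
by case/eqP: kn; apply: val_inj; rewrite val_add1.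
Qed.

Lemma PT_entry (Y : 'M[R]_n) i j : (Y *m (Pshift R n)^T) i j = Y i (j + 1).
Proof.
rewrite mxE (bigD1 (j + 1)) //= big1 ?addr0 => [|k kn].
  by rewrite !mxE val_add1 eqxx mulr1.
rewrite !mxE; case: eqP => [h|]; last by rewrite mulr0.
by case/eqP: kn; apply: val_inj; rewrite val_add1.
Qed.

Lemma hankel (Y : 'M[R]_n) : Pshift R n *m Y = Y *m (Pshift R n)^T ->
  Y = Xv (\col_i Y i 0 : G).
Proof.
move=> HY.
have step i j : Y (i + 1) j = Y i (j + 1).
  by rewrite -P_entry HY PT_entry.
have key (k : nat) i : Y i (inZp k) = Y (i + inZp k) 0.
  elim: k i => [|k IH] i.
    by congr (Y _ _); apply: val_inj; rewrite /= ?mod0n ?addr0 // addn0 modn_small.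
  have -> : (inZp k.+1 : 'I_n) = inZp k + 1.
    by apply: val_inj; rewrite /= [(1 %% _)%N]modn_small // modnDml addn1.
  by rewrite -step IH addrAC addrA.
by apply/matrixP => i j; rewrite XvE mxE -[j in LHS]valZpK key valZpK.
Qed.

Lemma Hc_form (Hc : 'M[R]_(n + n)) : Hc^T = Hc -> Amat R n *m Hc = Hc *m (Amat R n)^T ->
  exists a b c, Hc = Hf a b c.
Proof.
rewrite -(submxK Hc) /Amat !tr_block_mx !trmx0 !mulmx_block => hs ha.
move: ha; rewrite !mul0mx !mulmx0 !addr0 !add0r => /eq_block_mx [h11 h12 h21 h22].
case/eq_block_mx: hs => s11 s12 s21 s22.
exists (\col_i ulsubmx Hc i 0), (\col_i ursubmx Hc i 0), (\col_i drsubmx Hc i 0).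
rewrite /Hf -(hankel h11) -(hankel h12) -(hankel h22).
by rewrite /Hf -s21; congr block_mx; rewrite (hankel h12) XvT.
Qed.

Definition p1 : G := delta_mx (-1) 0.

Lemma PCm : Pshift R n = Cm p1.
Proof.
apply/matrixP => i j; rewrite !mxE eqxx andbT; congr ((nat_of_bool _)%:R).
apply/idP/idP => /eqP h; apply/eqP.
  have -> : j = i + 1 by apply: val_inj; rewrite val_add1.
  by rewrite opprD addrA subrr add0r.
have -> : j = i + 1 by rewrite -[j](subKK i) h opprK.
by rewrite val_add1.
Qed.

Lemma mxpowP k : mxpow (Pshift R n) k = Cm (p1 ^+ k).
Proof.
elim: k => [|k IH]; first by rewrite expr0 Cm1'.
by rewrite /mxpow iterS -/(mxpow _ k) IH exprS PCm -CmM.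
Qed.

Lemma mxpowA k : mxpow (Amat R n) k = block_mx (mxpow (Pshift R n) k) 0 0 (mxpow (Pshift R n) k).
Proof.
elim: k => [|k IH]; first by rewrite /mxpow /= (scalar_mx_block n n).
rewrite /mxpow !iterS -!/(mxpow _ k) IH /Amat mulmx_block.
by rewrite !mul0mx !mulmx0 !addr0 !add0r.
Qed.

Lemma Bform (alpha : 'I_n -> R) :
  \sum_(i < n) alpha i *: mxpow (Amat R n) i =
  block_mx (Cm (\sum_(i < n) sc (alpha i) * p1 ^+ i)) 0 0 (Cm (\sum_(i < n) sc (alpha i) * p1 ^+ i)).
Proof.
pose f (X : 'M[R]_n) : 'M[R]_(n + n) := block_mx X 0 0 X.
have fD : {morph f : X Y / X + Y}.
  by move=> X Y; rewrite /f add_block_mx !addr0.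
have f0 : f 0 = 0 by rewrite /f block_mx0.
transitivity (\sum_(i < n) f (Cm (sc (alpha i) * p1 ^+ i))).
  apply: eq_bigr => i _; rewrite mxpowA mxpowP scale_block_mx !scaler0 /f Cmsc //.
by rewrite -(big_morph f fD f0) -(big_morph (@Cm R m) (@CmD R m) (@Cm0 R m)).
Qed.

Lemma s2 (s : G) : block_mx (Cm s) 0 0 (Cm s) *m block_mx (Cm s) 0 0 (Cm s) = 1%:M -> s * s = 1.
Proof.
rewrite mulmx_block (scalar_mx_block n n) => /eq_block_mx [h _ _ _].
move: h; rewrite mulmx0 addr0 -CmM => /(congr1 (fun M => M *m (@e0 R m))).
rewrite Cme0 mul1mx => h; rewrite gmulE g1E; exact: h.
Qed.

Lemma BH (s a b c : G) : block_mx (Cm s) 0 0 (Cm s) *m Hf a b c = Hf (s * a) (s * b) (s * c).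
Proof. by rewrite /Hf mulmx_block !mul0mx !addr0 !add0r !CmXv. Qed.

Lemma PiT_s eps (s a b c : G) x : s * s = 1 ->
  PiT eps (Hf (s * a) (s * b) (s * c)) x = PiT eps (Hf a b c) x.
Proof.
move=> ss; rewrite !PiE /Phi /phi /Delta !flipM.
have fs : flip s * flip s = 1 by rewrite -flipM ss flip1.
have -> : sc (eps ^+ 2) * (flip s * flip a * (flip s * flip c) - flip s * flip b * (flip s * flip b))
   = sc (eps ^+ 2) * (flip s * flip s) * (flip a * flip c - flip b * flip b) by ring.
by rewrite fs mulr1.
Qed.

End Struct.

Lemma pm_ext (R : numFieldType) N (Pi1 Pi2 : 'cV[R]_N -> 'M[R]_N) F1 F2 (dom1 dom2 : 'cV[R]_N -> bool) :
  (forall y, Pi1 y = Pi2 y) -> (forall y, F1 y = F2 y) -> (forall y, dom1 y = dom2 y) ->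
  poisson_map Pi1 F1 dom1 -> poisson_map Pi2 F2 dom2.
Proof.
move=> hP hF hd H x dx; rewrite -hd in dx; case: (H x dx) => D [J E]; exists D; split.
  move=> e e0; case: (J e e0) => d d0 Hd; exists d => // h hh; rewrite -!hF; exact: Hd.
by rewrite -!hP -hF.
Qed.

Lemma qjac_ext (R : numFieldType) N (f1 f2 : 'cV[R]_N -> 'cV[R]_N) y :
  (forall z, f1 z = f2 z) -> qjac f1 y = qjac f2 y.
Proof. by move=> hf; apply/matrixP => i j; rewrite !mxE !hf. Qed.

Section Final.
Variable R : numFieldType.
Variable m : nat.
Local Notation n := m.+2.
Local Notation G := (G R m).

Lemma qjac_sym (a b c : G) y z :
  qjac (hamvf (Hf a b c)) y *m z = qjac (hamvf (Hf a b c)) z *m y.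
Proof. by rewrite !qjacE -!quad [z + y]addrC addrAC. Qed.

Lemma pm eps (a b c : G) :
  poisson_map (PiT eps (Hf a b c)) (kahan (hamvf (Hf a b c)) eps)
    (kahan_defined (hamvf (Hf a b c)) eps).
Proof.
move=> x hx; eexists; split; last exact: (kahan_pois hx).
exact: (kahan_jac (@qjac_sym a b c) hx).
Qed.

End Final.

Theorem mainTheorem3 (R : numFieldType) (n : nat) (hn : (2 <= n)%N)
  (Hc : 'M[R]_(n + n)) (hsym : Hc^T = Hc)
  (hadm : Amat R n *m Hc = Hc *m (Amat R n)^T)
  (alpha : 'I_n -> R)
  (hB : (\sum_(i < n) alpha i *: mxpow (Amat R n) i) *m
        (\sum_(i < n) alpha i *: mxpow (Amat R n) i) = 1%:M)
  (eps : R) :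
  let B := \sum_(i < n) alpha i *: mxpow (Amat R n) i in
  let f := hamvf Hc in
  let g := assocvf B Hc in
  let Pi := PiT eps Hc in
  poisson_tensor Pi /\
  poisson_map Pi (kahan f eps) (kahan_defined f eps) /\
  poisson_map Pi (kahan g eps) (kahan_defined g eps).
Proof.
move: hn Hc hsym hadm alpha hB eps; case: n => [|[|m]] // _ Hc hsym hadm alpha hB eps.
have [a [b [c Hcf]]] := Hc_form hsym hadm.
subst Hc => B f g Pi.
split; first exact: pt.
split; first exact: pm.
move: hB; rewrite Bform; set s := \sum_(i < _) _ => /s2 ss.
have gE z : hamvf (Hf (s * a) (s * b) (s * c)) z = g z.
  by rewrite /g /assocvf /B Bform -/s /hamvf -BH !mulmxA.
have H1 := @pm R m eps (s * a) (s * b) (s * c).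
move: H1; apply: pm_ext.
- by move=> y; rewrite PiT_s.
- by move=> y; rewrite /kahan (qjac_ext _ gE).
- by move=> y; rewrite /kahan_defined (qjac_ext _ gE).
Qed.
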